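(* Let $T$ be a lifted graph, $F\colon T\to T$ a continuous sun-like map of degree 1, ${\cal P}$ a basic partition of $F$ and ${\cal G}$ its covering graph. If $(A_n)_{n\ge0}$ is the itinerary of some point $x\in X^\infty$ and $\alpha_n:=A_0\dots A_n/\!\sim$, then $(\alpha_n)_{n\ge0}$ is an infinite path in ${\cal G}$. Conversely, if $(\alpha_n)_{n\ge0}$ is an infinite path in ${\cal G}$ with $H(\alpha_0)=k$, then there exists a point $x\in X^\infty$ whose itinerary $(A_n)_{n\ge0}$ satisfies $\alpha_n=A_0\dots A_{n+k}/\!\sim$ for all $n\ge0$.
   Context: A lifted graph is a connected topological space $T$ with a homeomorphism $h\colon\mathbb R\to h(\mathbb R)\subset T$ and a homeomorphism $\tau\colon T\to T$ such that $\tau(h(x))=h(x+1)$, the closure of each connected component of $T\setminus h(\mathbb R)$ is a topological finite graph meeting $h(\mathbb R)$ in exactly one point, and only finitely many such components have closure meeting $h([0,1])$. Identify $h(\mathbb R)$ with $\mathbb R$, write $x+m:=\tau^m(x)$; $r_{\mathbb R}\colon T\to\mathbb R$ is the identity on $\mathbb R$ and maps a component $C$ of $T\setminus\mathbb R$ to the point $\overline C\cap\mathbb R$. $F$ has degree 1 if $F(x+1)=F(x)+1$. Let $T_{\mathbb R}:=\overline{\bigcup_{n\ge0}F^n(\mathbb R)}$, $X:=\overline{T\setminus T_{\mathbb R}}\cap r_{\mathbb R}^{-1}([0,1))$. $F$ is sun-like if $(T\setminus T_{\mathbb R})\cap r_{\mathbb R}^{-1}([0,1))$ consists of finitely many intervals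 with pairwise disjoint closures $X^i$, $i\in\Lambda$ (branches), each a compact interval meeting $T_{\mathbb R}$ in one endpoint $\min X^i$ (fixing the order of $X^i$). $X^\infty:=\{x\in X:F^n(x)\in X+\mathbb Z\ \forall n\ge0\}$. A basic partition is a finite family ${\cal P}=\{X^i_j\}$ of pairwise disjoint nonempty compact intervals $X^i_1<\dots<X^i_{N_i}$ in $X^i$, with $\ell(X^i_j)\in\Lambda$, $p(X^i_j)\in\mathbb Z$, such that $F(X^i_j)\subset(X^{\ell(X^i_j)}+p(X^i_j))\cup\mathrm{Int}(T_{\mathbb R})$, $F(\min X^i_j)=\min X^{\ell(X^i_j)}+p(X^i_j)$, and $F(X\setminus\bigcup X^i_j)\cap(X+\mathbb Z)=\emptyset$. For $x\in X^\infty$ and each $n\ge0$ there is a unique $A_n\in{\cal P}$ with $F^n(x)\in A_n+\mathbb Z$; $(A_n)_{n\ge0}$ is the itinerary of $x$. For $A_0,\dots,A_n\in{\cal P}$, $\langle A_0\dots A_n\rangle:=F^n(\{x\in T: F^i(x)\in A_i+\mathbb Z,\ 0\le i\le n\})\cap X$. $A_0\dots A_n\sim B_0\dots B_m$ iff for some $k\le\min(n,m)$, $A_{n-i}=B_{m-i}$ ($0\le i\le k$) and $\langle A_0\dots A_{n-k}\rangle=A_{n-k}=B_{m-k}=\langle B_0\dots B_{m-k}\rangle$. The covering graph ${\cal G}$: vertices are classes $A_0\dots A_n/\!\sim$ with $\langle A_0\dots A_n\rangle\ne\emptyset$; arrow $\alpha\to\beta$ iff $\alpha=A_0\dots A_n/\!\sim$,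 $\beta=A_0\dots A_nA_{n+1}/\!\sim$ for some $A_i\in{\cal P}$. An infinite path is a sequence of vertices $(\alpha_n)$ with $\alpha_n\to\alpha_{n+1}$ for all $n$. The significant part of $A_0\dots A_n$ is $A_i\dots A_n$ with $i$ largest such that $A_0\dots A_n\sim A_i\dots A_n$; the height of its class is $H:=n-i$. *)

(* Defs.v *)
From HB Require Import structures.
From mathcomp Require Import all_boot all_order all_algebra.
From mathcomp Require Import all_classical all_reals topology normedtype.
From Stdlib Require Import Relations.
Set Implicit Arguments. Unset Strict Implicit. Unset Printing Implicit Defensive.
Import Order.TTheory GRing.Theory Num.Theory.
Import numFieldNormedType.Exports.
Local Open Scope classical_set_scope.
Local Open Scope ring_scope.

Section LiftedGraphs.
Context {R : realType} {T : topologicalType}.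

Definition I01 : set R := [set t | 0 <= t <= 1].
Definition I01o : set R := [set t | 0 <= t < 1].

(** [f] restricted to [A] is a homeomorphism onto its image (subspace topologies) *)
Definition embedding_on {Y : topologicalType} (A : set R) (f : R -> Y) :=
  [/\ {in A &, injective f},
      (forall V : set Y, open V -> exists U : set R, open U /\ A `&` f @^-1` V = A `&` U) &
      (forall U : set R, open U -> exists V : set Y, open V /\ f @` (A `&` U) = f @` A `&` V)].

Definition topological_finite_graph (G : set T) :=
  exists (V : seq T) (E : seq (R -> T)),
    [/\ G = [set` V] `|` \bigcup_(e in [set` E]) (e @` I01),
        (forall e, e \in E -> embedding_on I01 e /\ (e 0 \in V) /\ (e 1 \in V)),
        (forall e t, e \in E -> 0 < t < 1 -> e t \notin V) &
        (forall i j (e1 e2 : R -> T), onth E i = Some e1 -> onth E j = Some e2 ->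
           i <> j -> forall t s, 0 < t < 1 -> 0 < s < 1 -> e1 t <> e2 s)].

Variables (h : R -> T) (tau tauinv : T -> T).

Definition hR : set T := range h.

Definition lifted_graph :=
  [/\ connected [set: T],
      embedding_on [set: R] h,
      [/\ cancel tau tauinv, cancel tauinv tau, continuous tau & continuous tauinv] /\
      (forall x, tau (h x) = h (x + 1)),
      (forall x, ~ hR x ->
         topological_finite_graph (closure (connected_component (~` hR) x)) /\
         exists y, closure (connected_component (~` hR) x) `&` hR = [set y]) &
      finite_set [set C : set T | exists2 x, ~ hR x &
          C = connected_component (~` hR) x /\
          closure C `&` (h @` I01) !=set0]].

(** x + m := tau^m x *)
Definition trans (m : int) (x : T) : T :=
  match m with Posz n => iter n tau x | Negz n => iter n.+1 tauinv x end.

Definition addZ (A : set T) : set T := [set z | exists (m : int) (y : T), A y /\ z = trans m y].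

Definition rR (x : T) : T :=
  if `[< hR x >] then x
  else xget x (closure (connected_component (~` hR) x) `&` hR).

Variable F : T -> T.

Definition degree_one := forall x, F (tau x) = tau (F x).

Definition TR : set T := closure (\bigcup_(n in [set: nat]) (iter n F @` hR)).

Definition Xset : set T := closure (~` TR) `&` rR @^-1` (h @` I01o).

(** sun-like: the branches X^i are the arcs [gam i @` I01], indexed by the
    finite type [L] (= Lambda), oriented so that [gam i 0] = min X^i. *)
Variables (L : finType) (gam : L -> R -> T).

Definition branch (i : L) : set T := gam i @` I01.

Definition sun_like :=
  let S := ~` TR `&` rR @^-1` (h @` I01o) in
  [/\ (forall i, embedding_on I01 (gam i)),
      S `<=` \bigcup_(i in [set: L]) branch i,
      (forall i, connected (S `&` branch i) /\ closure (S `&` branch i) = branch i),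
      (forall i j, i != j -> branch i `&` branch j = set0) &
      (forall i, branch i `&` TR = [set gam i 0])].

Definition XZ : set T := addZ Xset.

Definition Xinf : set T := [set x | Xset x /\ forall n, XZ (iter n F x)].

Variables (P : finType) (br : P -> L) (lo hi : P -> R) (ell : P -> L) (pp : P -> int).

Definition piece (A : P) : set T := gam (br A) @` [set t | lo A <= t <= hi A].

Definition basic_partition :=
  [/\ (forall A, 0 <= lo A /\ lo A <= hi A /\ hi A <= 1),
      (forall A B, A != B -> piece A `&` piece B = set0),
      (forall A, F @` piece A `<=`
                 (trans (pp A) @` branch (ell A)) `|` interior TR),
      (forall A, F (gam (br A) (lo A)) = trans (pp A) (gam (ell A) 0)) &
      F @` (Xset `\` \bigcup_(A in [set: P]) piece A) `&` XZ = set0].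

Definition itinerary (x : T) (As : nat -> P) := forall n, addZ (piece (As n)) (iter n F x).

Definition bracket (w : seq P) : set T :=
  (iter (size w).-1 F @`
     [set y | forall i c, onth w i = Some c -> addZ (piece c) (iter i F y)])
  `&` Xset.

Definition sim (v w : seq P) :=
  (0 < size v)%N /\ (0 < size w)%N /\
  let n := (size v).-1 in let m := (size w).-1 in
  exists k, (k <= minn n m)%N /\
    (forall i, (i <= k)%N -> onth v (n - i) = onth w (m - i)) /\
    exists c, onth v (n - k) = Some c /\
      bracket (take (n - k).+1 v) = piece c /\
      bracket (take (m - k).+1 w) = piece c.

(** equivalence class of a word (equivalence closure of ~, which the paper
    asserts is an equivalence relation) *)
Definition wclass (w : seq P) : set (seq P) :=
  [set v | clos_refl_sym_trans (seq P) sim w v].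

Definition vertex (a : set (seq P)) :=
  exists w, (0 < size w)%N /\ bracket w !=set0 /\ a = wclass w.

Definition arrow (a b : set (seq P)) :=
  vertex a /\ vertex b /\
  exists w c, (0 < size w)%N /\ a = wclass w /\ b = wclass (rcons w c).

Definition infinite_path (a : nat -> set (seq P)) := forall n, arrow (a n) (a n.+1).

Definition height (w : seq P) (k : nat) :=
  exists i, (i < size w)%N /\ k = ((size w).-1 - i)%N /\ sim w (drop i w) /\
    forall j, (i < j < size w)%N -> ~ sim w (drop j w).

End LiftedGraphs.

(* Main.v *)
Require Import Defs.
From HB Require Import structures.
From mathcomp Require Import all_boot all_order all_algebra.
From mathcomp Require Import all_classical all_reals topology normedtype.
From mathcomp Require Import zify ring lra.
From Stdlib Require Import Relations.
Import Order.TTheory GRing.Theory Num.Theory.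
Import numFieldNormedType.Exports.
Local Open Scope classical_set_scope.
Local Open Scope ring_scope.
Set Implicit Arguments. Unset Strict Implicit. Unset Printing Implicit Defensive.


Lemma int_ind2 (Q : int -> Prop) : Q 0 -> (forall m, Q m -> Q (m + 1)) ->
  (forall m, Q m -> Q (m - 1)) -> forall m, Q m.
Proof.
move=> Q0 QS QP [n|n].
- elim: n => // n IH; have -> : Posz n.+1 = Posz n + 1 by rewrite -addn1 PoszD.
  exact: QS.
- elim: n => [|n IH]; first by have -> : Negz 0 = 0 - 1 by []; exact: QP.
  have -> : Negz n.+1 = Negz n - 1 by rewrite !NegzE; lia.
  exact: QP.
Qed.

Lemma transS (T : topologicalType) (tau tauinv : T -> T) :
  cancel tau tauinv -> cancel tauinv tau ->
  forall m x, trans tau tauinv (m + 1) x = tau (trans tau tauinv m x).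
Proof.
move=> c1 c2 [n|n] x.
- by rewrite -PoszD addn1.
- case: n => [|n]; first by rewrite /= c2.
  have -> : Negz n.+1 + 1 = Negz n by rewrite !NegzE; lia.
  by rewrite /= c2.
Qed.

Lemma transP (T : topologicalType) (tau tauinv : T -> T) :
  cancel tau tauinv -> cancel tauinv tau ->
  forall m x, trans tau tauinv (m - 1) x = tauinv (trans tau tauinv m x).
Proof.
move=> c1 c2 m x; have := transS c1 c2 (m - 1) x; rewrite subrK => ->.
by rewrite c1.
Qed.

Lemma trans_add (T : topologicalType) (tau tauinv : T -> T) :
  cancel tau tauinv -> cancel tauinv tau ->
  forall m n x, trans tau tauinv (m + n) x = trans tau tauinv m (trans tau tauinv n x).
Proof.
move=> c1 c2 m n x; elim/int_ind2: m.
- by rewrite add0r.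
- by move=> m IH; rewrite addrAC !transS // IH.
- by move=> m IH; rewrite addrAC !transP // IH.
Qed.

Lemma trans_inv (T : topologicalType) (tau tauinv : T -> T) :
  cancel tau tauinv -> cancel tauinv tau ->
  forall m x, trans tau tauinv (- m) (trans tau tauinv m x) = x.
Proof. by move=> c1 c2 m x; rewrite -trans_add // addNr. Qed.

Lemma trans_inv' (T : topologicalType) (tau tauinv : T -> T) :
  cancel tau tauinv -> cancel tauinv tau ->
  forall m x, trans tau tauinv m (trans tau tauinv (- m) x) = x.
Proof. by move=> c1 c2 m x; rewrite -trans_add // addrN. Qed.

Lemma F_trans (T : topologicalType) (tau tauinv F : T -> T) :
  cancel tau tauinv -> cancel tauinv tau -> (forall x, F (tau x) = tau (F x)) ->
  forall m x, F (trans tau tauinv m x) = trans tau tauinv m (F x).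
Proof.
move=> c1 c2 dF m x.
have dFi y : F (tauinv y) = tauinv (F y).
  by rewrite -{2}(c2 y) dF c1.
elim/int_ind2: m => //.
- by move=> m IH; rewrite !transS // dF IH.
- by move=> m IH; rewrite !transP // dFi IH.
Qed.

Lemma iterF_trans (T : topologicalType) (tau tauinv F : T -> T) :
  cancel tau tauinv -> cancel tauinv tau -> (forall x, F (tau x) = tau (F x)) ->
  forall n m x, iter n F (trans tau tauinv m x) = trans tau tauinv m (iter n F x).
Proof.
move=> c1 c2 dF n m x; elim: n => //= n ->; exact: F_trans.
Qed.

Lemma trans_h (R : realType) (T : topologicalType) (h : R -> T) (tau tauinv : T -> T) :
  cancel tau tauinv -> cancel tauinv tau -> (forall x, tau (h x) = h (x + 1)) ->
  forall m s, trans tau tauinv m (h s) = h (s + m%:~R).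
Proof.
move=> c1 c2 ht m s; elim/int_ind2: m.
- by rewrite addr0.
- by move=> m IH; rewrite transS // IH ht intrD addrA.
- move=> m IH; rewrite transP // IH intrB addrA.
  by rewrite -[in LHS](subrK 1 (s + m%:~R)) -ht c1.
Qed.

Lemma trans_continuous (T : topologicalType) (tau tauinv : T -> T) :
  cancel tau tauinv -> cancel tauinv tau -> continuous tau -> continuous tauinv ->
  forall m, continuous (trans tau tauinv m).
Proof.
move=> c1 c2 ct ci m; elim/int_ind2: m.
- by move=> x; exact: cvg_id.
- move=> m IH; apply/continuousP => A oA.
  have -> : trans tau tauinv (m + 1) @^-1` A = trans tau tauinv m @^-1` (tau @^-1` A).
    by apply/seteqP; split => y /=; rewrite transS.
  by move/continuousP: IH; apply; move/continuousP: ct; apply.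
- move=> m IH; apply/continuousP => A oA.
  have -> : trans tau tauinv (m - 1) @^-1` A = trans tau tauinv m @^-1` (tauinv @^-1` A).
    by apply/seteqP; split => y /=; rewrite transP.
  by move/continuousP: IH; apply; move/continuousP: ci; apply.
Qed.

Lemma addZ_trans (T : topologicalType) (tau tauinv : T -> T) :
  cancel tau tauinv -> cancel tauinv tau ->
  forall A k z, addZ tau tauinv A z -> addZ tau tauinv A (trans tau tauinv k z).
Proof.
move=> c1 c2 A k z [m [y [Ay ->]]]; exists (k + m), y; split => //.
by rewrite trans_add.
Qed.

Lemma addZ_self (T : topologicalType) (tau tauinv : T -> T) A z :
  A z -> addZ tau tauinv A z.
Proof. by move=> Az; exists 0, z. Qed.


Lemma onth_rcons (X : Type) (s : seq X) c i :
  onth (rcons s c) i = if (i < size s)%N then onth s i else if i == size s then Some c else None.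
Proof.
rewrite -cats1 onth_cat; case: ltnP => // H.
case: eqP => [->|ne]; first by rewrite subnn.
by rewrite onth_default //=; lia.
Qed.

Lemma onth_take (X : Type) (s : seq X) n i :
  (i < n)%N -> onth (take n s) i = onth s i.
Proof.
elim: s n i => [|x s IH] [|n] [|i] //= H; exact: IH.
Qed.

Lemma take_onth (X : Type) (s : seq X) n x :
  onth s n = Some x -> take n.+1 s = rcons (take n s) x.
Proof.
move=> H; have Hn : (n < size s)%N by rewrite -onthTE H.
by rewrite (take_nth x Hn); congr rcons; exact: (onth_nth x x s n H).
Qed.

Lemma onth_mkseq (X : Type) (f : nat -> X) n i :
  onth (mkseq f n) i = if (i < n)%N then Some (f i) else None.
Proof.
case: ltnP => H; last by rewrite onth_default // size_mkseq.
have H2 : (i < size (mkseq f n))%N by rewrite size_mkseq.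
move: H2; rewrite -onthTE; case E: onth => [y|] // _.
by have := onth_nth (f i) y _ _ E; rewrite nth_mkseq // => ->.
Qed.


Definition Cond (R : realType) (T : topologicalType) (tau tauinv F : T -> T)
  (L : finType) (gam : L -> R -> T) (P : finType) (br : P -> L) (lo hi : P -> R)
  (w : seq P) : set T :=
  [set y | forall i c, onth w i = Some c ->
     addZ tau tauinv (piece gam br lo hi c) (iter i F y)].

Definition Dw (R : realType) (T : topologicalType) (tau tauinv F : T -> T)
  (L : finType) (gam : L -> R -> T) (P : finType) (br : P -> L) (lo hi : P -> R)
  (w : seq P) : set T :=
  iter (size w).-1 F @` Cond tau tauinv F gam br lo hi w.

Lemma bracketE (R : realType) (T : topologicalType) (h : R -> T) (tau tauinv F : T -> T)
  (L : finType) (gam : L -> R -> T) (P : finType) (br : P -> L) (lo hi : P -> R) w :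
  bracket h tau tauinv F gam br lo hi w = Dw tau tauinv F gam br lo hi w `&` Xset h F.
Proof. by []. Qed.

Lemma Cond_trans (R : realType) (T : topologicalType) (tau tauinv F : T -> T)
  (L : finType) (gam : L -> R -> T) (P : finType) (br : P -> L) (lo hi : P -> R) :
  cancel tau tauinv -> cancel tauinv tau -> (forall x, F (tau x) = tau (F x)) ->
  forall w m y, Cond tau tauinv F gam br lo hi w y ->
    Cond tau tauinv F gam br lo hi w (trans tau tauinv m y).
Proof.
move=> c1 c2 dF w m y Hy i c Hi; rewrite iterF_trans //.
exact/addZ_trans/(Hy i c Hi).
Qed.

Lemma Dw_trans (R : realType) (T : topologicalType) (tau tauinv F : T -> T)
  (L : finType) (gam : L -> R -> T) (P : finType) (br : P -> L) (lo hi : P -> R) :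
  cancel tau tauinv -> cancel tauinv tau -> (forall x, F (tau x) = tau (F x)) ->
  forall w m z, Dw tau tauinv F gam br lo hi w z ->
    Dw tau tauinv F gam br lo hi w (trans tau tauinv m z).
Proof.
move=> c1 c2 dF w m z [y Hy <-]; exists (trans tau tauinv m y).
  exact: Cond_trans.
by rewrite iterF_trans.
Qed.

Lemma Dw_rcons (R : realType) (T : topologicalType) (tau tauinv F : T -> T)
  (L : finType) (gam : L -> R -> T) (P : finType) (br : P -> L) (lo hi : P -> R) u c :
  (0 < size u)%N ->
  Dw tau tauinv F gam br lo hi (rcons u c) =
  F @` Dw tau tauinv F gam br lo hi u `&` addZ tau tauinv (piece gam br lo hi c).
Proof.
move=> su; rewrite /Dw size_rcons /=; apply/seteqP; split => z.
- move=> [y Hy <-]; split.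
    exists (iter (size u).-1 F y); last by rewrite -iterS prednK.
    exists y => //; move=> i d Hi; apply: Hy; rewrite onth_rcons.
    by rewrite ifT ?Hi // -onthTE Hi.
  by apply: Hy; rewrite onth_rcons ltnn eqxx.
- move=> [[w [y Hy <-] <-] Hc]; exists y; last by rewrite -iterS prednK.
  move=> i d; rewrite onth_rcons; case: ltnP => H; first exact: Hy.
  case: eqP => // -> [<-]; by rewrite -[in X in addZ _ _ _ X](prednK su).
Qed.

Lemma Dw_last (R : realType) (T : topologicalType) (tau tauinv F : T -> T)
  (L : finType) (gam : L -> R -> T) (P : finType) (br : P -> L) (lo hi : P -> R) w c :
  onth w (size w).-1 = Some c ->
  Dw tau tauinv F gam br lo hi w `<=` addZ tau tauinv (piece gam br lo hi c).
Proof. by move=> Hc z [y Hy <-]; exact: Hy. Qed.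

Lemma Dw_full (R : realType) (T : topologicalType) (h : R -> T) (tau tauinv F : T -> T)
  (L : finType) (gam : L -> R -> T) (P : finType) (br : P -> L) (lo hi : P -> R) :
  cancel tau tauinv -> cancel tauinv tau -> (forall x, F (tau x) = tau (F x)) ->
  forall w c, onth w (size w).-1 = Some c ->
  bracket h tau tauinv F gam br lo hi w = piece gam br lo hi c ->
  Dw tau tauinv F gam br lo hi w = addZ tau tauinv (piece gam br lo hi c).
Proof.
move=> c1 c2 dF w c Hc Hb; apply/seteqP; split; first exact: Dw_last.
move=> z [m [y [Hy ->]]]; apply: Dw_trans => //.
by move: Hy; rewrite -Hb => -[].
Qed.


Lemma sim_Dw (R : realType) (T : topologicalType) (h : R -> T) (tau tauinv F : T -> T)
  (L : finType) (gam : L -> R -> T) (P : finType) (br : P -> L) (lo hi : P -> R) :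
  cancel tau tauinv -> cancel tauinv tau -> (forall x, F (tau x) = tau (F x)) ->
  forall v w, sim h tau tauinv F gam br lo hi v w ->
  Dw tau tauinv F gam br lo hi v = Dw tau tauinv F gam br lo hi w.
Proof.
move=> c1 c2 dF v w [sv [sw]] /=.
set n := (size v).-1; set m := (size w).-1.
move=> [k [Hk [Heq [c [Hc [Hbv Hbw]]]]]].
have kn : (k <= n)%N by move: Hk; rewrite leq_min => /andP[].
have km : (k <= m)%N by move: Hk; rewrite leq_min => /andP[].
have vn : size v = n.+1 by rewrite /n prednK.
have wm : size w = m.+1 by rewrite /m prednK.
have Hcw : onth w (m - k) = Some c by rewrite -Heq.
suff: forall j, (j <= k)%N ->
  Dw tau tauinv F gam br lo hi (take (n - k + j).+1 v) =
  Dw tau tauinv F gam br lo hi (take (m - k + j).+1 w).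
  move=> /(_ k (leqnn k)); rewrite !subnK // take_oversize ?vn //.
  by rewrite take_oversize ?wm.
elim => [_|j IH Hj].
- rewrite !addn0.
  have sz1 : size (take (n - k).+1 v) = (n - k).+1 by rewrite size_takel // vn; lia.
  have sz2 : size (take (m - k).+1 w) = (m - k).+1 by rewrite size_takel // wm; lia.
  rewrite (@Dw_full _ _ h _ _ _ _ _ _ _ _ _ c1 c2 dF _ c) //; last by rewrite sz1 /= onth_take.
  rewrite (@Dw_full _ _ h _ _ _ _ _ _ _ _ _ c1 c2 dF _ c) //; last by rewrite sz2 /= onth_take.
- have := Heq (k - j.+1)%N; rewrite leq_subr => /(_ isT).
  have -> : (n - (k - j.+1))%N = (n - k + j).+1 by lia.
  have -> : (m - (k - j.+1))%N = (m - k + j).+1 by lia.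
  move=> E.
  have : (((n - k + j).+1) < size v)%N by rewrite vn; lia.
  rewrite -onthTE; case Ev: (onth v (n - k + j).+1) => [x|] // _.
  have Ew : onth w (m - k + j).+1 = Some x by rewrite -E.
  rewrite !addnS (take_onth Ev) (take_onth Ew) !Dw_rcons ?IH //; first exact: ltnW.
  + by rewrite size_takel; lia.
  + by rewrite size_takel; [|rewrite vn]; lia.
Qed.

Lemma crst_Dw (R : realType) (T : topologicalType) (h : R -> T) (tau tauinv F : T -> T)
  (L : finType) (gam : L -> R -> T) (P : finType) (br : P -> L) (lo hi : P -> R) :
  cancel tau tauinv -> cancel tauinv tau -> (forall x, F (tau x) = tau (F x)) ->
  forall v w, clos_refl_sym_trans _ (sim h tau tauinv F gam br lo hi) v w ->
  Dw tau tauinv F gam br lo hi v = Dw tau tauinv F gam br lo hi w.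
Proof.
move=> c1 c2 dF v w; elim.
- by move=> x y; apply: sim_Dw.
- by [].
- by move=> x y _ ->.
- by move=> x y z _ -> _ ->.
Qed.

Lemma wclass_eq (R : realType) (T : topologicalType) (h : R -> T) (tau tauinv F : T -> T)
  (L : finType) (gam : L -> R -> T) (P : finType) (br : P -> L) (lo hi : P -> R) v w :
  clos_refl_sym_trans _ (sim h tau tauinv F gam br lo hi) v w ->
  wclass h tau tauinv F gam br lo hi v = wclass h tau tauinv F gam br lo hi w.
Proof.
move=> H; apply/seteqP; split => u /= Hu.
- apply: rst_trans Hu; exact: rst_sym.
- exact: rst_trans Hu.
Qed.

Lemma wclass_crst (R : realType) (T : topologicalType) (h : R -> T) (tau tauinv F : T -> T)
  (L : finType) (gam : L -> R -> T) (P : finType) (br : P -> L) (lo hi : P -> R) v w :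
  wclass h tau tauinv F gam br lo hi v = wclass h tau tauinv F gam br lo hi w ->
  clos_refl_sym_trans _ (sim h tau tauinv F gam br lo hi) v w.
Proof.
move=> E; have : wclass h tau tauinv F gam br lo hi w w by exact: rst_refl.
by rewrite -E.
Qed.

Lemma sim_rcons (R : realType) (T : topologicalType) (h : R -> T) (tau tauinv F : T -> T)
  (L : finType) (gam : L -> R -> T) (P : finType) (br : P -> L) (lo hi : P -> R) v w c :
  sim h tau tauinv F gam br lo hi v w ->
  sim h tau tauinv F gam br lo hi (rcons v c) (rcons w c).
Proof.
move=> [sv [sw]] /=; set n := (size v).-1; set m := (size w).-1.
move=> [k [Hk [Heq [d [Hd [Hbv Hbw]]]]]].
have vn : size v = n.+1 by rewrite /n prednK.
have wm : size w = m.+1 by rewrite /m prednK.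
have kn : (k <= n)%N by move: Hk; rewrite leq_min => /andP[].
have km : (k <= m)%N by move: Hk; rewrite leq_min => /andP[].
rewrite /sim !size_rcons /=; split => //; split => //.
exists k.+1; rewrite vn wm /=; split; first by move: Hk; rewrite /n /m vn wm /=; lia.
split.
- move=> i Hi; rewrite !onth_rcons vn wm.
  case: i Hi => [|i] Hi.
    by rewrite !subn0 !ltnn !eqxx.
  have -> : (n.+1 - i.+1 = n - i)%N by lia.
  have -> : (m.+1 - i.+1 = m - i)%N by lia.
  have -> : (n - i < n.+1)%N by lia.
  have -> : (m - i < m.+1)%N by lia.
  exact: Heq.
- exists d; rewrite !subSS onth_rcons vn.
  have -> : (n - k < n.+1)%N by lia.
  split => //.
  rewrite -!cats1 !takel_cat ?vn ?wm; last 2 first.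
  + lia.
  + lia.
  by [].
Qed.

Lemma crst_rcons (R : realType) (T : topologicalType) (h : R -> T) (tau tauinv F : T -> T)
  (L : finType) (gam : L -> R -> T) (P : finType) (br : P -> L) (lo hi : P -> R) v w c :
  clos_refl_sym_trans _ (sim h tau tauinv F gam br lo hi) v w ->
  clos_refl_sym_trans _ (sim h tau tauinv F gam br lo hi) (rcons v c) (rcons w c).
Proof.
elim.
- by move=> x y H; apply: rst_step; exact: sim_rcons.
- by move=> x; exact: rst_refl.
- by move=> x y _ H; exact: rst_sym.
- by move=> x y z _ H1 _ H2; exact: rst_trans H2.
Qed.


Lemma Cond_itin (R : realType) (T : topologicalType) (tau tauinv F : T -> T)
  (L : finType) (gam : L -> R -> T) (P : finType) (br : P -> L) (lo hi : P -> R) x As N :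
  itinerary tau tauinv F gam br lo hi x As ->
  Cond tau tauinv F gam br lo hi (mkseq As N) x.
Proof.
move=> It i c; rewrite onth_mkseq; case: ltnP => // _ [<-]; exact: It.
Qed.

Lemma part1 (R : realType) (T : topologicalType)
  (h : R -> T) (tau tauinv : T -> T) (F : T -> T)
  (L : finType) (gam : L -> R -> T)
  (P : finType) (br : P -> L) (lo hi : P -> R) :
  cancel tau tauinv -> cancel tauinv tau ->
  degree_one tau F ->
  (forall (x : T) (As : nat -> P),
     Xinf h tau tauinv F x ->
     itinerary tau tauinv F gam br lo hi x As ->
     infinite_path h tau tauinv F gam br lo hi (fun n => wclass h tau tauinv F gam br lo hi (mkseq As n.+1))).
Proof.
move=> c1 c2 dF x As [Xx XZx] It.
have V N : vertex h tau tauinv F gam br lo hi (wclass h tau tauinv F gam br lo hi (mkseq As N.+1)).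
  exists (mkseq As N.+1); split; first by rewrite size_mkseq.
  split => //.
  have [m [y [Xy E]]] := XZx N.
  exists y; split => //.
  exists (trans tau tauinv (- m) x); first exact/Cond_trans/Cond_itin.
  by rewrite size_mkseq /= iterF_trans // E trans_inv.
move=> n; split; first exact: V.
split; first exact: V.
exists (mkseq As n.+1), (As n.+1); split; first by rewrite size_mkseq.
by split => //; rewrite -mkseqS.
Qed.


Lemma nbhs_pre (T : topologicalType) (f : T -> T) (x : T) (W : set T) :
  continuous f -> nbhs (f x) W -> nbhs x (f @^-1` W).
Proof. by move=> cf; apply: cf. Qed.

Lemma closure_image_sub (T : topologicalType) (f : T -> T) (B : set T) :
  continuous f -> f @` closure B `<=` closure (f @` B).
Proof.
move=> cf _ [y cy <-] W /(nbhs_pre cf) /cy [u [Bu Wu]].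
by exists (f u); split => //; exists u.
Qed.

Lemma closure_image (T : topologicalType) (f g : T -> T) (B : set T) :
  cancel f g -> cancel g f -> continuous f -> continuous g ->
  closure (f @` B) = f @` closure B.
Proof.
move=> c1 c2 cf cg; apply/seteqP; split; last exact: closure_image_sub.
move=> z cz; exists (g z); last by rewrite c2.
have : (g @` closure (f @` B)) (g z) by exists z.
move/(@closure_image_sub _ g _ cg); rewrite image_comp.
by rewrite (_ : g \o f = id) ?image_id //; apply/funext => y /=; rewrite c1.
Qed.

Lemma cc_image_sub (T : topologicalType) (f : T -> T) (A : set T) x :
  continuous f -> (forall y, A y -> A (f y)) ->
  f @` connected_component A x `<=` connected_component A (f x).
Proof.
move=> cf fA; have [Ax|nAx] := pselect (A x); last first.
  by rewrite connected_component_out // image_set0.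
apply: connected_component_max.
- by exists x => //; exact: connected_component_refl.
- by move=> _ [y /connected_component_sub Ay <-]; exact: fA.
- apply: connected_continuous_connected; first exact: component_connected.
  exact: continuous_subspaceT.
Qed.

Lemma cc_image (T : topologicalType) (f g : T -> T) (A : set T) x :
  cancel f g -> cancel g f -> continuous f -> continuous g ->
  (forall y, A y -> A (f y)) -> (forall y, A y -> A (g y)) ->
  connected_component A (f x) = f @` connected_component A x.
Proof.
move=> c1 c2 cf cg fA gA; apply/seteqP; split; last exact: cc_image_sub.
move=> z cz; exists (g z); last by rewrite c2.
have : (g @` connected_component A (f x)) (g z) by exists z.
by move/(@cc_image_sub _ g A (f x) cg gA); rewrite c1.
Qed.

Lemma hR_TR (R : realType) (T : topologicalType) (h : R -> T) (F : T -> T) x :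
  hR h x -> TR h F x.
Proof.
by move=> hx; apply: subset_closure; exists 0%N => //; exists x.
Qed.

Lemma lg_parts (R : realType) (T : topologicalType) (h : R -> T) (tau tauinv : T -> T) :
  lifted_graph h tau tauinv ->
  [/\ cancel tau tauinv, cancel tauinv tau, continuous tau, continuous tauinv &
      forall x, tau (h x) = h (x + 1)].
Proof. by case=> _ _ [[]]. Qed.

Lemma hR_tau (R : realType) (T : topologicalType) (h : R -> T) (tau tauinv : T -> T) :
  lifted_graph h tau tauinv ->
  (forall x, hR h x -> hR h (tau x)) /\ (forall x, hR h x -> hR h (tauinv x)).
Proof.
move=> /lg_parts [c1 c2 _ _ ht]; split => _ [s _ <-].
- by exists (s + 1) => //; rewrite ht.
- exists (s - 1) => //; by rewrite -[in RHS](subrK 1 s) -ht c1.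
Qed.

Lemma rR_hR (R : realType) (T : topologicalType) (h : R -> T) x :
  hR h x -> rR h x = x.
Proof. by move=> hx; rewrite /rR asboolT. Qed.

Lemma rR_nhR (R : realType) (T : topologicalType) (h : R -> T) x y :
  ~ hR h x ->
  closure (connected_component (~` hR h) x) `&` hR h = [set y] -> rR h x = y.
Proof.
move=> nx E; rewrite /rR asboolF //; apply: xget_unique; first by rewrite E.
by move=> z; rewrite E.
Qed.

Lemma rR_tau (R : realType) (T : topologicalType) (h : R -> T) (tau tauinv : T -> T) :
  lifted_graph h tau tauinv -> forall x, rR h (tau x) = tau (rR h x).
Proof.
move=> lg; have [c1 c2 ct ci ht] := lg_parts lg.
have [Ht Hi] := hR_tau lg.
move=> x; have [hx|nx] := pselect (hR h x).
  by rewrite !rR_hR //; exact: Ht.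
have ntx : ~ hR h (tau x) by move=> /Hi; rewrite c1.
case: lg => _ _ _ /(_ x nx) [_ [y Ey]] _.
rewrite (rR_nhR nx Ey); apply: rR_nhR => //.
rewrite (cc_image x c1 c2 ct ci); last 2 first.
- by move=> z nz /Hi; rewrite c1.
- by move=> z nz /Ht; rewrite c2.
rewrite (closure_image _ c1 c2 ct ci); apply/seteqP; split.
- move=> _ [[w cw <-] hw]; have hw' : hR h w by have := Hi _ hw; rewrite c1.
  have : [set y] w by rewrite -Ey.
  by move=> /= ->.
- by move=> _ ->; have : [set y] y by []; rewrite -Ey => -[cy hy]; split; [exists y|exact: Ht].
Qed.

Lemma rR_trans (R : realType) (T : topologicalType) (h : R -> T) (tau tauinv : T -> T) :
  lifted_graph h tau tauinv -> forall m x, rR h (trans tau tauinv m x) = trans tau tauinv m (rR h x).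
Proof.
move=> lg; have [c1 c2 ct ci ht] := lg_parts lg.
have rt := rR_tau lg.
have ri y : rR h (tauinv y) = tauinv (rR h y).
  by rewrite -{2}(c2 y) rt c1.
move=> m x; elim/int_ind2: m => //.
- by move=> m IH; rewrite !transS // rt IH.
- by move=> m IH; rewrite !transP // ri IH.
Qed.


Lemma Xset_disj (R : realType) (T : topologicalType) (h : R -> T) (tau tauinv F : T -> T) :
  lifted_graph h tau tauinv -> forall m x,
  Xset h F x -> Xset h F (trans tau tauinv m x) -> m = 0.
Proof.
move=> lg; have [c1 c2 ct ci ht] := lg_parts lg.
have hinj : {in [set: R] &, injective h} by case: lg => _ [].
move=> m x [_ [s Is Es]] [_ [s' Is' Es']].
rewrite rR_trans // -Es trans_h // in Es'.
have := hinj _ _ (in_setT s') (in_setT (s + m%:~R)) Es' => E.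
move: Is Is'; rewrite /I01o /= E => /andP[s0 s1] /andP[t0 t1].
have m1 : m%:~R < 1 :> R by lra.
have m2 : -1 < m%:~R :> R by lra.
have : m < 1 by rewrite -(ltr_int R).
have : -1 < m by rewrite -(ltr_int R).
lia.
Qed.

Lemma TR_trans (R : realType) (T : topologicalType) (h : R -> T) (tau tauinv F : T -> T) :
  lifted_graph h tau tauinv -> degree_one tau F ->
  forall m y, TR h F y -> TR h F (trans tau tauinv m y).
Proof.
move=> lg dF; have [c1 c2 ct ci ht] := lg_parts lg.
move=> m y Ty W /(nbhs_pre (@trans_continuous _ _ _ c1 c2 ct ci m)) /Ty [u [[n _ [_ [s _ <-] <-]] Wu]].
exists (trans tau tauinv m (iter n F (h s))); split => //.
exists n => //; exists (h (s + m%:~R)); first by exists (s + m%:~R).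
by rewrite -(trans_h c1 c2 ht) iterF_trans.
Qed.

Lemma intTR_trans (R : realType) (T : topologicalType) (h : R -> T) (tau tauinv F : T -> T) :
  lifted_graph h tau tauinv -> degree_one tau F ->
  forall m y, (TR h F)° (trans tau tauinv m y) -> (TR h F)° y.
Proof.
move=> lg dF; have [c1 c2 ct ci ht] := lg_parts lg.
move=> m y /(nbhs_pre (@trans_continuous _ _ _ c1 c2 ct ci m)) H.
apply: filterS H => z /= /(TR_trans lg dF (m:=- m)); by rewrite trans_inv.
Qed.

Lemma XZ_nint (R : realType) (T : topologicalType) (h : R -> T) (tau tauinv F : T -> T) :
  lifted_graph h tau tauinv -> degree_one tau F ->
  forall z, XZ h tau tauinv F z -> ~ (TR h F)° z.
Proof.
move=> lg dF z [m [y [[cy _] ->]]] /(intTR_trans lg dF).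
by move: cy; rewrite closure_setC.
Qed.


Lemma emb_within (R : realType) (T : topologicalType) (g : R -> T) :
  embedding_on I01 g -> forall t, I01 t -> forall W, nbhs (g t) W ->
  exists2 U, nbhs t U & forall t', U t' -> I01 t' -> W (g t').
Proof.
move=> [inj pre _] t It W; rewrite nbhsE => -[B [oB Bg] BW].
have [U [oU E]] := pre B oB.
have Ut : U t by have : (I01 `&` g @^-1` B) t by []; rewrite E => -[].
exists U; first exact: open_nbhs_nbhs.
move=> t' Ut' It'; apply: BW.
by have : (I01 `&` U) t' by []; rewrite -E => -[].
Qed.

Lemma emb_cont_sub (R : realType) (T : topologicalType) (g : R -> T) (A : set R) :
  embedding_on I01 g -> A `<=` I01 -> {within A, continuous g}.
Proof.
move=> eg AI; apply/subspace_continuousP => x Ax W /= Wn.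
have [U Un UW] := emb_within eg (AI _ Ax) Wn.
rewrite /within /=; apply: filterS Un => y Uy Ay; exact: UW _ Uy (AI _ Ay).
Qed.

Lemma emb_param (R : realType) (T : topologicalType) (g : R -> T) :
  embedding_on I01 g -> forall U : set R, open U -> forall s, I01 s -> U s ->
  exists2 V : set T, open V & V (g s) /\ forall t, I01 t -> V (g t) -> U t.
Proof.
move=> [inj _ img] U oU s Is Us.
have [V [oV E]] := img U oU.
exists V => //; split.
  have : (g @` (I01 `&` U)) (g s) by exists s.
  by rewrite E => -[].
move=> t It Vt.
have : (g @` (I01 `&` U)) (g t) by rewrite E; split => //; exists t.
move=> [t' [It' Ut'] Et]; have := inj _ _ (mem_set It') (mem_set It) Et.
by move=> <-.
Qed.

Lemma rR_cc (R : realType) (T : topologicalType) (h : R -> T) (tau tauinv : T -> T) :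
  lifted_graph h tau tauinv -> forall x x', ~ hR h x ->
  connected_component (~` hR h) x x' -> rR h x' = rR h x.
Proof.
move=> lg x x' nx cxx'.
have nx' : ~ hR h x' by have := connected_component_sub cxx'.
case: lg => _ _ _ /(_ x nx) [_ [y Ey]] _.
rewrite (rR_nhR nx Ey); apply: rR_nhR => //.
by rewrite -(same_connected_component cxx').
Qed.


Lemma sl_parts (R : realType) (T : topologicalType) (h : R -> T) (F : T -> T)
  (L : finType) (gam : L -> R -> T) :
  sun_like h F gam ->
  [/\ (forall i, embedding_on I01 (gam i)),
      (forall i, closure ((~` TR h F `&` rR h @^-1` (h @` I01o)) `&` branch gam i) = branch gam i),
      (forall i j, i != j -> branch gam i `&` branch gam j = set0) &
      (forall i, branch gam i `&` TR h F = [set gam i 0])].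
Proof. by case=> e _ c d t; split => // i; case: (c i). Qed.

Lemma gam_nTR (R : realType) (T : topologicalType) (h : R -> T) (F : T -> T)
  (L : finType) (gam : L -> R -> T) :
  sun_like h F gam -> forall i t, I01 t -> t != 0 -> ~ TR h F (gam i t).
Proof.
move=> /sl_parts [e _ _ tip] i t It t0 Tt.
have : (branch gam i `&` TR h F) (gam i t) by split => //; exists t.
rewrite tip => /= E.
have [inj _ _] := e i.
have I0 : I01 (0 : R) by rewrite /I01 /= lexx ler01.
by move: t0; rewrite (inj _ _ (mem_set It) (mem_set I0) E) eqxx.
Qed.

Lemma gam_cc (R : realType) (T : topologicalType) (h : R -> T) (F : T -> T)
  (L : finType) (gam : L -> R -> T) :
  sun_like h F gam -> forall i s, I01 s -> ~ hR h (gam i s) ->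
  connected_component (~` hR h) (gam i 1) (gam i s).
Proof.
move=> sl i s Is ns; have [e _ _ _] := sl_parts sl.
have [s0 s1] : 0 <= s /\ s <= 1 by move: Is => /andP.
have sub : `[s, 1] `<=` I01.
  by move=> t; rewrite /= in_itv /= => /andP[st t1]; apply/andP; split => //; apply: le_trans st.
suff : (gam i @` `[s, 1]) `<=` connected_component (~` hR h) (gam i 1).
  by apply; exists s => //; rewrite /= in_itv /= lexx.
apply: connected_component_max.
- by exists 1 => //; rewrite /= in_itv /= lexx s1.
- move=> _ [t Tt <-]; have It := sub _ Tt.
  have [->//|ts] := eqVneq t s.
  move=> /(@hR_TR _ _ h F _); apply: (gam_nTR sl It).
  move: Tt; rewrite /= in_itv /= => /andP[st _].
  apply/eqP => t0; move: ts; rewrite t0 => /eqP; apply; lra.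
- apply: connected_continuous_connected; first exact: segment_connected.
  exact: emb_cont_sub.
Qed.

Lemma I01_0 (R : realType) : I01 (0 : R).
Proof. by rewrite /I01 /= lexx ler01. Qed.
Lemma I01_1 (R : realType) : I01 (1 : R).
Proof. by rewrite /I01 /= lexx ler01. Qed.

Lemma gam_nhR (R : realType) (T : topologicalType) (h : R -> T) (F : T -> T)
  (L : finType) (gam : L -> R -> T) :
  sun_like h F gam -> forall i t, I01 t -> t != 0 -> ~ hR h (gam i t).
Proof. by move=> sl i t It t0 /(@hR_TR _ _ h F _); apply: gam_nTR. Qed.

Lemma rR_gam1 (R : realType) (T : topologicalType) (h : R -> T) (tau tauinv F : T -> T)
  (L : finType) (gam : L -> R -> T) :
  lifted_graph h tau tauinv -> sun_like h F gam -> forall i, (h @` I01o) (rR h (gam i 1)).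
Proof.
move=> lg sl i; have [e cl _ tip] := sl_parts sl.
have : (closure ((~` TR h F `&` rR h @^-1` (h @` I01o)) `&` branch gam i)) (gam i 0).
  by rewrite cl; exists 0 => //; exact: I01_0.
move=> H; have [z [[nTz Sz] [t It Et]]] :
    ((~` TR h F `&` rR h @^-1` (h @` I01o)) `&` branch gam i) !=set0.
  apply/set0P/negP => /eqP E; move: H; rewrite E closure0 => //.
subst z.
have t0 : t != 0.
  apply/eqP => t0; apply: nTz; rewrite t0.
  by have : [set gam i 0] (gam i 0) by []; rewrite -tip => -[].
have n1 : ~ hR h (gam i 1) by apply: (gam_nhR sl (I01_1 R)); rewrite oner_eq0.
rewrite -(rR_cc lg n1 (gam_cc sl It (gam_nhR sl It t0))); exact: Sz.
Qed.

Lemma gam0_rR (R : realType) (T : topologicalType) (h : R -> T) (tau tauinv F : T -> T)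
  (L : finType) (gam : L -> R -> T) :
  lifted_graph h tau tauinv -> sun_like h F gam -> forall i, hR h (gam i 0) ->
  gam i 0 = rR h (gam i 1).
Proof.
move=> lg sl i h0; have [e _ _ _] := sl_parts sl.
have n1 : ~ hR h (gam i 1) by apply: (gam_nhR sl (I01_1 R)); rewrite oner_eq0.
have cl : closure (connected_component (~` hR h) (gam i 1)) (gam i 0).
  move=> W /(emb_within (e i) (I01_0 R)) [U /nbhs_ballP [r r0 rU] UW].
  set t := Num.min (r / 2) 1.
  have t0 : 0 < t by rewrite lt_min ltr01 andbT divr_gt0.
  have t1 : t <= 1 by rewrite ge_min lexx orbT.
  have It : I01 t by apply/andP; split => //; exact: ltW.
  exists (gam i t); split.
    by apply: (gam_cc sl It); apply: (gam_nhR sl It); rewrite gt_eqF.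
  apply: UW It; apply: rU; rewrite /ball /= sub0r normrN gtr0_norm //.
  by rewrite gt_min ltr_pdivrMr // ltr_pMr // ltr1n.
case: lg => _ _ _ /(_ _ n1) [_ [y Ey]] _.
rewrite (rR_nhR n1 Ey).
by have : (closure (connected_component (~` hR h) (gam i 1)) `&` hR h) (gam i 0) by [];
  rewrite Ey.
Qed.

Lemma branch_Xset (R : realType) (T : topologicalType) (h : R -> T) (tau tauinv F : T -> T)
  (L : finType) (gam : L -> R -> T) :
  lifted_graph h tau tauinv -> sun_like h F gam -> forall i s, I01 s -> Xset h F (gam i s).
Proof.
move=> lg sl i s Is; have [e cl _ _] := sl_parts sl.
split.
  have : branch gam i (gam i s) by exists s.
  by rewrite -cl; apply: closureS => z [[]].
have [hs|ns] := pselect (hR h (gam i s)).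
  have s0 : s = 0.
    apply/eqP/negPn/negP => s0; exact: (gam_nhR sl Is s0 hs).
  move: hs; rewrite s0 => hs; rewrite /preimage /= rR_hR // (gam0_rR lg sl hs).
  exact: (rR_gam1 lg sl i).
rewrite /preimage /= (rR_cc lg _ (gam_cc sl Is ns)).
  exact: (rR_gam1 lg sl i).
by apply: (gam_nhR sl (I01_1 R)); rewrite oner_eq0.
Qed.


Definition ev (R : realType) (t : R) (C : set R) (Pr : R -> Prop) :=
  exists2 W, nbhs t W & forall t', W t' -> C t' -> Pr t'.

Lemma evI (R : realType) (t : R) C (P1 P2 : R -> Prop) :
  ev t C P1 -> ev t C P2 -> ev t C (fun x => P1 x /\ P2 x).
Proof.
move=> [W1 n1 H1] [W2 n2 H2]; exists (W1 `&` W2); first exact: filterI.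
by move=> x [w1 w2] Cx; split; [exact: H1|exact: H2].
Qed.

Lemma ev_ex (R : realType) (t : R) C (Pr : R -> Prop) :
  closure C t -> ev t C Pr -> exists x, C x /\ Pr x.
Proof.
by move=> ct [W nW HW]; have [x [Cx Wx]] := ct W nW; exists x; split => //; exact: HW.
Qed.

Lemma ev_imp (R : realType) (t : R) C (P1 P2 : R -> Prop) :
  (forall x, C x -> P1 x -> P2 x) -> ev t C P1 -> ev t C P2.
Proof. by move=> H [W nW HW]; exists W => // x Wx Cx; apply: H => //; exact: HW. Qed.

Lemma ev_all (R : realType) (t : R) C (Pr : R -> Prop) :
  (forall x, C x -> Pr x) -> ev t C Pr.
Proof. by move=> H; exists setT => [|x _]; [exact: filterT|exact: H]. Qed.

Definition conv (R : realType) (T : topologicalType) (t : R) (C : set R) (z : R -> T) (p : T) :=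
  forall V, open V -> V p -> ev t C (fun x => V (z x)).

Lemma conv_comp (R : realType) (T : topologicalType) (t : R) C (z : R -> T) p (f : T -> T) :
  continuous f -> conv t C z p -> conv t C (fun x => f (z x)) (f p).
Proof.
move=> cf cz V oV Vp; apply: (cz (f @^-1` V)) => //.
by move/continuousP: cf; apply.
Qed.

Lemma conv_ev (R : realType) (T : topologicalType) (t : R) C (z : R -> T) p V :
  conv t C z p -> open V -> V p -> ev t C (fun x => V (z x)).
Proof. by move=> cz oV Vp; exact: cz. Qed.

Definition EE (R : realType) (T : topologicalType) (tau tauinv F : T -> T)
  (L : finType) (gam : L -> R -> T) (P : finType) (br : P -> L) (lo hi : P -> R)
  (As : nat -> P) (K : nat) : set R :=
  [set t' | lo (As 0%N) <= t' <= hi (As 0%N) /\ forall i, (i <= K)%N ->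
     addZ tau tauinv (piece gam br lo hi (As i)) (iter i F (gam (br (As 0%N)) t'))].

Lemma closed_EE (R : realType) (T : topologicalType)
  (h : R -> T) (tau tauinv : T -> T) (F : T -> T)
  (L : finType) (gam : L -> R -> T)
  (P : finType) (br : P -> L) (lo hi : P -> R) (ell : P -> L) (pp : P -> int) :
  lifted_graph h tau tauinv ->
  continuous F ->
  degree_one tau F ->
  sun_like h F gam ->
  basic_partition h tau tauinv F gam br lo hi ell pp ->
  forall As K t, closure (EE tau tauinv F gam br lo hi As K) t ->
    EE tau tauinv F gam br lo hi As K t.
Proof.
move=> lg cF dF sl bp As K t ct.
have [c1 c2 ctau ci ht] := lg_parts lg.
have tc m := @trans_continuous _ _ _ c1 c2 ctau ci m.
case: bp => bnd _ Fmap _ _.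
have [emb _ disj _] := sl_parts sl.
set C := EE tau tauinv F gam br lo hi As K in ct *.
set g0 := gam (br (As 0%N)).
have Ib c u : lo c <= u <= hi c -> I01 u.
  move=> /andP[l1 h1]; have [b1 [b2 b3]] := bnd c.
  by apply/andP; split; [exact: le_trans l1|exact: le_trans b3].
have CI x : C x -> I01 x by move=> [Ix _]; exact: (Ib (As 0%N)).
have pX c u : lo c <= u <= hi c -> Xset h F (gam (br c) u).
  by move=> Iu; apply: (branch_Xset lg sl); exact: Ib Iu.
have aX c z : addZ tau tauinv (piece gam br lo hi c) z -> XZ h tau tauinv F z.
  by move=> [m [y [[u Iu <-] ->]]]; exists m, (gam (br c) u); split => //; exact: pX.
have It : lo (As 0%N) <= t <= hi (As 0%N).
  apply/andP; split; rewrite leNgt; apply/negP => bad.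
  - have nW : nbhs t [set x | x < lo (As 0%N)] by apply: open_nbhs_nbhs; split => //; exact: open_lt.
    have [x [[/andP[lx _] _] xl]] := ct _ nW.
    by move: xl; rewrite /= ltNge lx.
  - have nW : nbhs t [set x | x > hi (As 0%N)] by apply: open_nbhs_nbhs; split => //; exact: open_gt.
    have [x [[/andP[_ hx] _] xl]] := ct _ nW.
    by move: xl; rewrite /= ltNge hx.
have conv0 : conv t C g0 (g0 t).
  move=> V oV Vt.
  have [U nU UV] := emb_within (emb (br (As 0%N))) (Ib _ _ It) (open_nbhs_nbhs (conj oV Vt)).
  by exists U => // x Ux Cx; apply: UV => //; exact: CI.
have convi i : conv t C (fun x => iter i F (g0 x)) (iter i F (g0 t)).
  elim: i => [|i IH] //=; exact: conv_comp cF IH.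
suff claim : forall i, (i <= K)%N -> exists m r, lo (As i) <= r <= hi (As i) /\
    iter i F (g0 t) = trans tau tauinv m (gam (br (As i)) r) /\
    ev t C (fun x => piece gam br lo hi (As i) (trans tau tauinv (- m) (iter i F (g0 x)))).
  split => // i iK; have [m [r [Ir [E _]]]] := claim i iK.
  by rewrite /g0 E; exists m, (gam (br (As i)) r); split => //; exists r.
elim => [_|i IH iK].
  exists 0, t; split => //; split => //.
  by apply: ev_all => x [Ix _]; rewrite oppr0; exists x.
have [m [r [Ir [Et evA]]]] := IH (ltnW iK).
set A := As i in Ir Et evA; set B := As i.+1.
set b := br A; set l := ell A; set p := pp A.
pose y x := trans tau tauinv (- m) (iter i F (g0 x)).
have yt : y t = gam b r by rewrite /y Et trans_inv.
have wE x : F (y x) = trans tau tauinv (- m) (iter i.+1 F (g0 x)).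
  by rewrite /y F_trans.
have convw : conv t C (fun x => F (y x)) (F (gam b r)).
  by rewrite -yt; apply: conv_comp cF _; apply: conv_comp (tc _) (convi i).
have evB : ev t C (fun x => addZ tau tauinv (piece gam br lo hi B) (F (y x))).
  apply: ev_all => x [_ Hx]; rewrite wE; apply: addZ_trans => //; exact: Hx.
have key x : piece gam br lo hi A (y x) -> addZ tau tauinv (piece gam br lo hi B) (F (y x)) ->
    l = br B /\ piece gam br lo hi B (trans tau tauinv (- p) (F (y x))).
  move=> pA aB.
  case: (Fmap A (F (y x)) (ex_intro2 _ _ (y x) pA erefl)); last first.
    by move=> Hi; exfalso; exact: (XZ_nint lg dF (aX _ _ aB) Hi).
  move=> [z [s Is <-] Es].
  move: aB => [q [v [[u Iu <-] Eq]]].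
  have E1 : gam l s = trans tau tauinv (- p + q) (gam (br B) u).
    by rewrite trans_add // -Eq -Es trans_inv.
  have q0 : - p + q = 0.
    apply: (Xset_disj lg (pX _ _ Iu)); rewrite -E1.
    by apply: (branch_Xset lg sl).
  rewrite q0 /= in E1.
  have lB : l = br B.
    apply/eqP; apply/negPn/negP => ne; have E0 := disj _ _ ne.
    have : (branch gam l `&` branch gam (br B)) (gam l s).
      by split; [exists s|rewrite E1; exists u => //; exact: Ib Iu].
    by rewrite E0.
  split => //; rewrite -Es (trans_inv c1 c2) E1; exists u => //.
have evK : ev t C (fun x => l = br B /\ piece gam br lo hi B (trans tau tauinv (- p) (F (y x)))).
  by apply: ev_imp (evI evA evB) => x _ [H1 H2]; exact: key.
have [x0 [_ [lB _]]] := ev_ex ct evK.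
have pAr : piece gam br lo hi A (gam b r) by exists r.
case: (Fmap A (F (gam b r)) (ex_intro2 _ _ (gam b r) pAr erefl)); last first.
  move=> Hi; have ev1 := conv_ev convw (@open_interior _ _) Hi.
  have [x [_ [Hx Hb]]] := ev_ex ct (evI ev1 evB).
  by exfalso; exact: (XZ_nint lg dF (aX _ _ Hb) Hx).
move=> [z [s Is <-] Es].
have conv2 : conv t C (fun x => trans tau tauinv (- p) (F (y x))) (gam l s).
  by rewrite -(trans_inv c1 c2 p (gam l s)) Es; exact: conv_comp (tc _) convw.
have Is' : lo B <= s <= hi B.
  apply/andP; split; rewrite leNgt; apply/negP => bad.
  - have [V oV [Vs VU]] := emb_param (emb l) (@open_lt _ (lo B)) Is bad.
    have [x [_ [Vx [_ [u Iu Eu]]]]] := ev_ex ct (evI (conv_ev conv2 oV Vs) evK).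
    move: Vx; rewrite -Eu -lB => /(VU _ (Ib _ _ Iu)) /=.
    by move: Iu => /andP[lu _]; rewrite ltNge lu.
  - have [V oV [Vs VU]] := emb_param (emb l) (@open_gt _ (hi B)) Is bad.
    have [x [_ [Vx [_ [u Iu Eu]]]]] := ev_ex ct (evI (conv_ev conv2 oV Vs) evK).
    move: Vx; rewrite -Eu -lB => /(VU _ (Ib _ _ Iu)) /=.
    by move: Iu => /andP[_ hu]; rewrite ltNge hu.
exists (m + p), s; split => //; split.
  have lB' : ell A = br B := lB.
  by rewrite iterS Et F_trans // -Es -trans_add // lB'.
apply: ev_imp evK => x _ [_ H]; rewrite opprD addrC trans_add // -wE; exact: H.
Qed.


Lemma exists_point (R : realType) (T : topologicalType)
  (h : R -> T) (tau tauinv : T -> T) (F : T -> T)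
  (L : finType) (gam : L -> R -> T)
  (P : finType) (br : P -> L) (lo hi : P -> R) (ell : P -> L) (pp : P -> int) :
  lifted_graph h tau tauinv ->
  continuous F ->
  degree_one tau F ->
  sun_like h F gam ->
  basic_partition h tau tauinv F gam br lo hi ell pp ->
  forall (As : nat -> P) k,
  (forall N, Dw tau tauinv F gam br lo hi (mkseq As (N + k).+1) !=set0) ->
  exists x, Xinf h tau tauinv F x /\ itinerary tau tauinv F gam br lo hi x As.
Proof.
move=> lg cF dF sl bp As k Hne.
have [c1 c2 ctau ci ht] := lg_parts lg.
have bp' := bp; case: bp' => bnd _ _ _ _.
set E := EE tau tauinv F gam br lo hi As.
set lo0 := lo (As 0%N); set hi0 := hi (As 0%N).
have mono N N' : (N <= N')%N -> E N' `<=` E N.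
  by move=> NN x [Ix Hx]; split => // i iN; apply: Hx; exact: leq_trans NN.
have Ebd N x : E N x -> lo0 <= x <= hi0 by case.
have Ene N : E N !=set0.
  have [z [y Cy _]] := Hne N.
  have := Cy 0%N (As 0%N); rewrite onth_mkseq /= => /(_ erefl).
  move=> [m [q [[u Iu Equ] Ey]]].
  exists u; apply: (mono N (N + k)%N); first exact: leq_addr.
  split => // i iN.
  have Cq : Cond tau tauinv F gam br lo hi (mkseq As (N + k).+1) (trans tau tauinv (- m) y).
    exact: Cond_trans.
  have := Cq i (As i); rewrite onth_mkseq ltnS iN => /(_ erefl).
  by rewrite Ey trans_inv // Equ.
have ubE N : has_ubound (E N) by exists hi0 => x /Ebd /andP[].
have EM N : E N (sup (E N)).
  by apply: (closed_EE lg cF dF sl bp); apply: closure_sup.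
pose M N := sup (E N).
pose Q := [set M N | N in [set: nat]].
have lbQ : lbound Q lo0 by move=> _ [N _ <-]; have /Ebd/andP[] := EM N.
have hiQ : has_inf Q by split; [exists (M 0%N), 0%N|exists lo0].
set t := inf Q.
have Et K : E K t.
  apply: (closed_EE lg cF dF sl bp) => W /nbhs_ballP [e e0 eW].
  have [_ [N _ <-] qlt] := inf_adherent e0 hiQ.
  set N' := maxn N K.
  have le1 : M N' <= M N.
    apply: ge_sup; first exact: Ene.
    move=> x /(mono N N' (leq_maxl _ _)) ExN; exact: ub_le_sup.
  have le2 : t <= M N' by apply: ge_inf; [exists lo0|exists N'].
  exists (M N'); split; first exact: (mono K N' (leq_maxr _ _)).
  apply: eW; rewrite /ball /= distrC ger0_norm ?subr_ge0 //.
  move: qlt; rewrite -/(M N) => qlt; lra.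
have It : I01 t.
  have [b1 [b2 b3]] := bnd (As 0%N); have /Ebd/andP[l1 h1] := Et 0%N.
  by apply/andP; split; [exact: le_trans l1|exact: le_trans b3].
have pX c u : lo c <= u <= hi c -> Xset h F (gam (br c) u).
  move=> /andP[l1 h1]; apply: (branch_Xset lg sl).
  have [b1 [b2 b3]] := bnd c.
  by apply/andP; split; [exact: le_trans l1|exact: le_trans b3].
exists (gam (br (As 0%N)) t); split; last first.
  by move=> n; have [_ H] := Et n; exact: H.
split; first by apply: (branch_Xset lg sl).
move=> n; have [_ H] := Et n.
have [m [y [[u Iu <-] ->]]] := H n (leqnn n).
by exists m, (gam (br (As n)) u); split => //; exact: pX.
Qed.


Unset Implicit Arguments.

Theorem mainTheorem8 (R : realType) (T : topologicalType)
  (h : R -> T) (tau tauinv : T -> T) (F : T -> T)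
  (L : finType) (gam : L -> R -> T)
  (P : finType) (br : P -> L) (lo hi : P -> R) (ell : P -> L) (pp : P -> int) :
  lifted_graph h tau tauinv ->
  continuous F ->
  degree_one tau F ->
  sun_like h F gam ->
  basic_partition h tau tauinv F gam br lo hi ell pp ->
  (forall (x : T) (As : nat -> P),
     Xinf h tau tauinv F x ->
     itinerary tau tauinv F gam br lo hi x As ->
     infinite_path h tau tauinv F gam br lo hi (fun n => wclass h tau tauinv F gam br lo hi (mkseq As n.+1)))
  /\
  (forall (a : nat -> set (seq P)) (k : nat),
     infinite_path h tau tauinv F gam br lo hi a ->
     (exists w, a 0%N = wclass h tau tauinv F gam br lo hi w /\ height h tau tauinv F gam br lo hi w k) ->
     exists (x : T) (As : nat -> P),
       [/\ Xinf h tau tauinv F x,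
           itinerary tau tauinv F gam br lo hi x As &
           forall n, a n = wclass h tau tauinv F gam br lo hi (mkseq As (n + k).+1)]).
Proof.
move=> lg cF dF sl bp.
have [c1 c2 ctau ci ht] := lg_parts lg.
split; first exact: part1.
move=> a k pa [w [a0 [i [iw [kE [simw _]]]]]].
have [f Hf] := choice (fun n => (pa n).2.2).
have [cf Hcf] := choice Hf.
set v0 := drop i w.
have sv0 : size v0 = k.+1 by rewrite size_drop kE; lia.
pose As j := if (j < k.+1)%N then nth (cf 0%N) v0 j else cf (j - k.+1)%N.
have Av0 : mkseq As k.+1 = v0.
  apply: (@eq_from_nth _ (cf 0%N)); first by rewrite size_mkseq sv0.
  by move=> j; rewrite size_mkseq => jk; rewrite nth_mkseq // /As jk.
have cl n : a n = wclass h tau tauinv F gam br lo hi (mkseq As (n + k).+1).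
  elim: n => [|n IH].
    by rewrite add0n Av0 a0; apply: wclass_eq; exact: rst_step.
  have [s0 [an an1]] := Hcf n.
  rewrite an1 addSn mkseqS.
  have -> : As (n + k).+1 = cf n.
    by rewrite /As ltnNge ltnS leq_addl /=; congr cf; lia.
  apply: wclass_eq; apply: crst_rcons; apply: wclass_crst.
  by rewrite -an IH.
have Hne N : Dw tau tauinv F gam br lo hi (mkseq As (N + k).+1) !=set0.
  have [z [_ [[y [Dy _]] Ez]]] := (pa N).1.
  rewrite (crst_Dw c1 c2 dF (wclass_crst (esym (etrans (esym Ez) (cl N))))).
  by exists y.
have [x [Xx Itx]] := exists_point lg cF dF sl bp Hne.
by exists x, As; split.
Qed.
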